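(* For any tile sets $\mathcal{T},\mathcal{U},\mathcal{B}$ with mutually consistent frequencies, $d(\mathcal{T},\mathcal{U};\mathcal{B})\le 2$. If moreover $\mathcal{T},\mathcal{U},\mathcal{B}$ consist only of exact tiles, then $d(\mathcal{T},\mathcal{U};\mathcal{B})\le 1$.
   Context: Fix $n,m\ge1$; $\mathcal{D}$ is the set of $n\times m$ binary matrices. A tile is $T=(t(T),a(T))$ with nonempty $t(T)\subseteq\{1..n\}$, $a(T)\subseteq\{1..m\}$, $\mathrm{area}(T)=t(T)\times a(T)$. $\mathrm{fr}(T;D)=\frac1{|\mathrm{area}(T)|}\sum_{(i,j)\in\mathrm{area}(T)}D(i,j)$, $\mathrm{fr}(T;p)=\sum_Dp(D)\mathrm{fr}(T;D)$. Each tile carries a target frequency $\alpha_T$; tile sets are consistent if some distribution on $\mathcal{D}$ attains all target frequencies simultaneously. For a tile set $\mathcal{T}$, $p^*_{\mathcal{T}}$ is the entropy-maximising distribution among those with $\mathrm{fr}(T;p)=\alpha_T$ for all $T\in\mathcal{T}$. $\mathrm{KL}(\mathcal{T}\|\mathcal{U})=\mathrm{KL}(p^*_{\mathcal{T}}\|p^*_{\mathcal{U}})$ (natural log). A tile is exact if its frequency is $0$ or $1$. With $\mathcal{M}=\mathcal{T}\cup\mathcal{U}\cup\mathcal{B}$, $d(\mathcal{T},\mathcal{U};\mathcal{B})=\frac{\mathrm{KL}(\mathcal{M}\|\mathcal{U}\cup\mathcal{B})+\mathrm{KL}(\mathcal{M}\|\mathcal{T}\cup\mathcal{B})}{\mathrm{KL}(\mathcal{M}\|\mathcal{B})}$,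 defined as $1$ if $\mathrm{KL}(\mathcal{M}\|\mathcal{B})=0$. *)

(* Defs.v *)
From HB Require Import structures.
From mathcomp Require Import all_boot.
From Stdlib Require Import Reals.
Set Implicit Arguments. Unset Strict Implicit. Unset Printing Implicit Defensive.

Definition bmat (n m : nat) := {ffun 'I_n * 'I_m -> bool}.

Record tile (n m : nat) := Tile { trows : {set 'I_n}; tcols : {set 'I_m} }.

Definition tile_nonempty n m (T : tile n m) : bool :=
  (trows T != set0) && (tcols T != set0).

(* A tile together with its target frequency alpha_T.
   A tile set is a finite list of such constrained tiles. *)
Definition ctile (n m : nat) := (tile n m * R)%type.
Definition tileset (n m : nat) := seq (ctile n m).

Definition rsum {I : finType} (F : I -> R) : R := \big[Rplus/0%R]_(i : I) F i.

Definition fr_mat n m (T : tile n m) (D : bmat n m) : R :=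
  Rmult (Rinv (INR (#|trows T| * #|tcols T|)))
    (\big[Rplus/0%R]_(i in trows T) \big[Rplus/0%R]_(j in tcols T)
        (if D (i, j) then 1%R else 0%R)).

Definition is_dist n m (p : bmat n m -> R) : Prop :=
  (forall D, (0 <= p D)%R) /\ rsum p = 1%R.

Definition fr_dist n m (T : tile n m) (p : bmat n m -> R) : R :=
  rsum (fun D => Rmult (p D) (fr_mat T D)).

Definition satisfies n m (S : tileset n m) (p : bmat n m -> R) : Prop :=
  is_dist p /\ forall c, List.In c S -> fr_dist c.1 p = c.2.

Definition consistent n m (S : tileset n m) : Prop := exists p, satisfies S p.

(* Shannon entropy (natural log); note ln 0 = 0 in Stdlib, so 0 ln 0 = 0. *)
Definition entropy n m (p : bmat n m -> R) : R :=
  Ropp (rsum (fun D => Rmult (p D) (ln (p D)))).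

Definition is_maxent n m (S : tileset n m) (p : bmat n m -> R) : Prop :=
  satisfies S p /\ forall q, satisfies S q -> (entropy q <= entropy p)%R.

Definition KL n m (p q : bmat n m -> R) : R :=
  rsum (fun D => if Rlt_dec 0 (p D) then Rmult (p D) (ln (Rdiv (p D) (q D))) else 0%R).

(* d(T,U;B) from the maxent distributions pM = p*_M, pUB = p*_{U u B},
   pTB = p*_{T u B}, pB = p*_B. *)
Definition dscore n m (pM pUB pTB pB : bmat n m -> R) : R :=
  if Req_EM_T (KL pM pB) 0 then 1%R
  else Rdiv (Rplus (KL pM pUB) (KL pM pTB)) (KL pM pB).

Definition exact_ct n m (c : ctile n m) : Prop := c.2 = 0%R \/ c.2 = 1%R.

(* Main.v *)
Require Import Defs.
From HB Require Import structures.
From mathcomp Require Import all_boot.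
From Stdlib Require Import Reals Lra.

Set Implicit Arguments. Unset Strict Implicit.

Lemma RplusA : associative Rplus. Proof. by move=> *; rewrite Rplus_assoc. Qed.
HB.instance Definition _ := Monoid.isComLaw.Build R 0%R Rplus RplusA Rplus_comm Rplus_0_l.

Local Open Scope R_scope.

Section Sums.
Variable I : finType.

Lemma bsum_add (P : pred I) (F G : I -> R) :
  \big[Rplus/0]_(i | P i) (F i + G i) = \big[Rplus/0]_(i | P i) F i + \big[Rplus/0]_(i | P i) G i.
Proof. exact: big_split. Qed.

Lemma bsum_scal (P : pred I) c (F : I -> R) :
  \big[Rplus/0]_(i | P i) (c * F i) = c * \big[Rplus/0]_(i | P i) F i.
Proof. elim/big_rec2: _ => [|i y1 y2 _ ->]; ring. Qed.

Lemma bsum_le (P : pred I) (F G : I -> R) :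
  (forall i, P i -> F i <= G i) ->
  \big[Rplus/0]_(i | P i) F i <= \big[Rplus/0]_(i | P i) G i.
Proof.
move=> H; apply: (big_ind2 (fun a b => a <= b)) => //; first lra.
move=> *; lra.
Qed.

Lemma bsum_ge0 (P : pred I) (F : I -> R) :
  (forall i, P i -> 0 <= F i) -> 0 <= \big[Rplus/0]_(i | P i) F i.
Proof. move=> H; apply: (big_ind (fun a => 0 <= a)) => //; [lra| move=> *; lra]. Qed.

Lemma bsum_term (P : pred I) (F : I -> R) j :
  P j -> (forall i, P i -> 0 <= F i) -> F j <= \big[Rplus/0]_(i | P i) F i.
Proof.
move=> Pj H; rewrite (bigD1 j) //=.
have : 0 <= \big[Rplus/0]_(i | P i && (i != j)) F i.
  by apply: bsum_ge0 => i /andP [] /H.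
lra.
Qed.

Lemma bsum_ext (P : pred I) (F G : I -> R) :
  (forall i, P i -> F i = G i) ->
  \big[Rplus/0]_(i | P i) F i = \big[Rplus/0]_(i | P i) G i.
Proof. exact: eq_bigr. Qed.

Lemma bsum_opp (P : pred I) (F : I -> R) :
  \big[Rplus/0]_(i | P i) (- F i) = - \big[Rplus/0]_(i | P i) F i.
Proof. elim/big_rec2: _ => [|i y1 y2 _ ->]; ring. Qed.

Lemma iter_Rplus k c : iter k (Rplus c) 0 = INR k * c.
Proof. elim: k => [|k IH]; first (simpl; ring). rewrite S_INR /= IH. ring. Qed.

Lemma bsum_const (A : {set I}) c :
  \big[Rplus/0]_(i in A) c = INR #|A| * c.
Proof. by rewrite big_const iter_Rplus. Qed.

Lemma rsum_add (F G : I -> R) : rsum (fun i => F i + G i) = rsum F + rsum G.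
Proof. exact: bsum_add. Qed.
Lemma rsum_scal c (F : I -> R) : rsum (fun i => c * F i) = c * rsum F.
Proof. exact: bsum_scal. Qed.
Lemma rsum_opp (F : I -> R) : rsum (fun i => - F i) = - rsum F.
Proof. exact: bsum_opp. Qed.
Lemma rsum_le (F G : I -> R) : (forall i, F i <= G i) -> rsum F <= rsum G.
Proof. by move=> H; apply: bsum_le. Qed.
Lemma rsum_ge0 (F : I -> R) : (forall i, 0 <= F i) -> 0 <= rsum F.
Proof. by move=> H; apply: bsum_ge0. Qed.
Lemma rsum_term (F : I -> R) j : (forall i, 0 <= F i) -> F j <= rsum F.
Proof. by move=> H; apply: bsum_term. Qed.
Lemma rsum_ext (F G : I -> R) : (forall i, F i = G i) -> rsum F = rsum G.
Proof. by move=> H; apply: bsum_ext. Qed.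
Lemma rsum_sub (F G : I -> R) : rsum (fun i => F i - G i) = rsum F - rsum G.
Proof. rewrite /Rminus rsum_add rsum_opp //. Qed.
Lemma rsum_zero (F : I -> R) : (forall i, F i = 0) -> rsum F = 0.
Proof. move=> H; rewrite (rsum_ext (G := fun i => 0 * F i)); last by move=> i; rewrite H; ring.
rewrite rsum_scal; ring. Qed.

End Sums.

Lemma ln_le_sub1 y : 0 < y -> ln y <= y - 1.
Proof. move=> Hy; have := exp_ineq1_le (ln y); rewrite exp_ln //; lra. Qed.

Lemma ln_div' a b : 0 < a -> 0 < b -> ln (a / b) = ln a - ln b.
Proof. move=> Ha Hb; have Hb' := Rinv_0_lt_compat b Hb.
rewrite /Rdiv ln_mult // ln_Rinv //. Qed.

Lemma psi_tangent y z : 0 <= y -> 0 < z ->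
  z * ln z + (ln z + 1) * (y - z) <= y * ln y.
Proof.
move=> Hy Hz; case: (Req_dec y 0) => [->|Hy0].
  rewrite Rmult_0_l; nra.
have Hy' : 0 < y by lra.
have H := ln_le_sub1 (Rdiv_lt_0_compat _ _ Hz Hy').
rewrite ln_div' // in H.
have H2 : y * (ln z - ln y) <= y * (z / y - 1) by apply: Rmult_le_compat_l; lra.
have E : y * (z / y - 1) = z - y by field; lra.
nra.
Qed.

Lemma psi_quad x h : 0 < x -> 0 <= x + h ->
  (x + h) * ln (x + h) <= x * ln x + (ln x + 1) * h + h * h / x.
Proof.
move=> Hx Hxh; case: (Req_dec (x + h) 0) => [E|Hne].
  rewrite E Rmult_0_l. have -> : h = - x by lra.
  have -> : (- x) * (- x) / x = x by field; lra. nra.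
have Hp : 0 < x + h by lra.
have H := ln_le_sub1 (Rdiv_lt_0_compat _ _ Hp Hx).
rewrite ln_div' // in H.
have H2 : (x + h) * (ln (x + h) - ln x) <= (x + h) * ((x + h) / x - 1)
  by apply: Rmult_le_compat_l; lra.
have E : (x + h) * ((x + h) / x - 1) = h + h * h / x by field; lra.
nra.
Qed.

Lemma psi_convex x y t : 0 <= x -> 0 <= y -> 0 < t < 1 ->
  ((1 - t) * x + t * y) * ln ((1 - t) * x + t * y) <= (1 - t) * (x * ln x) + t * (y * ln y).
Proof.
move=> Hx Hy Ht; set z := (1 - t) * x + t * y.
case: (Req_dec z 0) => [E|Hne].
  have Ex : x = 0 by rewrite /z in E; nra.
  have Ey : y = 0 by rewrite /z in E; nra.
  rewrite E Ex Ey !Rmult_0_l; lra.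
have Hz : 0 < z by rewrite /z in Hne *; nra.
have H1 := psi_tangent Hx Hz. have H2 := psi_tangent Hy Hz.
have H3 : (1 - t) * (z * ln z + (ln z + 1) * (x - z)) <= (1 - t) * (x * ln x)
  by apply: Rmult_le_compat_l; lra.
have H4 : t * (z * ln z + (ln z + 1) * (y - z)) <= t * (y * ln y)
  by apply: Rmult_le_compat_l; lra.
have E : (1 - t) * (z * ln z + (ln z + 1) * (x - z)) + t * (z * ln z + (ln z + 1) * (y - z))
   = z * ln z by rewrite /z; ring.
lra.
Qed.

From Stdlib Require Import Classical.

Lemma dist_ge0 n m (q : bmat n m -> R) : is_dist q -> forall D, 0 <= q D.
Proof. by case. Qed.

Lemma dist_le1 n m (q : bmat n m -> R) : is_dist q -> forall D, q D <= 1.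
Proof. case=> H0 H1 D; rewrite -H1; exact: rsum_term. Qed.

Definition mix n m (p q : bmat n m -> R) t := fun D => p D + t * (q D - p D).

Lemma mix_sat n m (S : tileset n m) p q t : satisfies S p -> satisfies S q ->
  (forall D, 0 <= mix p q t D) -> satisfies S (mix p q t).
Proof.
case=> [[p0 p1] pc] [[q0 q1] qc] H; split; first split => //.
  rewrite /mix rsum_add rsum_scal rsum_sub p1 q1; ring.
move=> c Hc; rewrite /fr_dist.
rewrite (rsum_ext (G := fun D => p D * fr_mat c.1 D + t * (q D * fr_mat c.1 D - p D * fr_mat c.1 D)));
  last by move=> D; rewrite /mix; ring.
have E1 := pc c Hc; have E2 := qc c Hc; rewrite /fr_dist in E1 E2.
rewrite rsum_add rsum_scal rsum_sub E1 E2; ring.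
Qed.

Lemma rsum_delta (I : finType) (i0 : I) c :
  rsum (fun i => if i == i0 then c else 0) = c.
Proof.
rewrite /rsum (bigD1 i0) //= eqxx big1 => [|i /negbTE ->] //; ring.
Qed.

Section ME.
Variables (n m : nat) (S : tileset n m) (p : bmat n m -> R).
Hypothesis Hp : is_maxent S p.

Lemma maxent_supp q : satisfies S q -> forall D, 0 < q D -> 0 < p D.
Proof.
move=> Hq D0 HqD; apply: NNPP => Hn.
have Hp0 : p D0 = 0 by have := dist_ge0 Hp.1.1 D0; lra.
set K := Rabs (entropy p - entropy q).
set a := q D0.
have Ha0 : 0 < a := HqD.
set t := exp (- (K + 1) / a).
have HK : 0 <= K by apply: Rabs_pos.
have Ht0 : 0 < t by apply: exp_pos.
have Ht1 : t < 1.
  have : 0 < (K + 1) / a by apply: Rdiv_lt_0_compat; lra.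
  move=> H; apply: (Rlt_le_trans _ (exp 0)); last by rewrite exp_0; lra.
  apply: exp_increasing; have -> : - (K + 1) / a = - ((K + 1) / a) by rewrite /Rdiv; ring.
  lra.
have Hlnt : ln t = - (K + 1) / a by rewrite /t ln_exp.
have Hmix : forall D, mix p q t D = (1 - t) * p D + t * q D by move=> D; rewrite /mix; ring.
have Hnn : forall D, 0 <= mix p q t D.
  move=> D; rewrite Hmix; have := dist_ge0 Hp.1.1 D; have := dist_ge0 Hq.1 D; nra.
have Hsat := mix_sat Hp.1 Hq Hnn.
have Hle := Hp.2 _ Hsat.
have Hterm : forall D, mix p q t D * ln (mix p q t D) <=
   (1 - t) * (p D * ln (p D)) + t * (q D * ln (q D)) + (if D == D0 then t * a * ln t else 0).
  move=> D; case: eqP => [->|_].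
    rewrite Hmix Hp0 -/a.
    have -> : (1 - t) * 0 + t * a = t * a by ring.
    rewrite ln_mult //; apply: Req_le; ring.
  rewrite Hmix Rplus_0_r; apply: psi_convex; [exact: (dist_ge0 Hp.1.1)|exact: (dist_ge0 Hq.1)|lra].
have Hsum := rsum_le Hterm.
rewrite !rsum_add !rsum_scal rsum_delta in Hsum.
have Hent : entropy p - entropy q <= K by apply: Rle_abs.
rewrite /entropy in Hle Hent.
have Ha : t * a * ln t = - t * (K + 1) by rewrite Hlnt; field; rewrite /a; lra.
rewrite Ha in Hsum.
set X := rsum (fun D => mix p q t D * ln (mix p q t D)) in Hsum Hle.
set Y := rsum (fun D => p D * ln (p D)) in Hsum Hle Hent.
set Z := rsum (fun D => q D * ln (q D)) in Hsum Hle Hent.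
nra.
Qed.

Lemma maxent_orth q : satisfies S q ->
  rsum (fun D => q D * ln (p D)) = rsum (fun D => p D * ln (p D)).
Proof.
move=> Hq.
set G := rsum (fun D => q D * ln (p D)) - rsum (fun D => p D * ln (p D)).
suff : G = 0 by rewrite /G; lra.
apply: NNPP => HG.
have p0 := dist_ge0 Hp.1.1. have q0 := dist_ge0 Hq.1. have q1 := dist_le1 Hq.1.
have p1 := dist_le1 Hp.1.1.
have Hsupp := maxent_supp Hq.
set W := rsum (fun D => if Rlt_dec 0 (p D) then / p D else 0).
have W0 : 0 <= W.
  apply: rsum_ge0 => D; case: Rlt_dec => H /=; [apply: Rlt_le; exact: Rinv_0_lt_compat | lra].
set d := / (1 + W).
have Ed : d * (1 + W) = 1 by rewrite /d; field; lra.
have d0 : 0 < d by apply: Rinv_0_lt_compat; lra.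
have dp : forall D, 0 < p D -> d <= p D.
  move=> D HD.
  have : / p D <= W.
    have := @rsum_term _ (fun D => if Rlt_dec 0 (p D) then / p D else 0) D.
    case: Rlt_dec => //= _; apply => D'; case: Rlt_dec => H /=; [apply: Rlt_le; exact: Rinv_0_lt_compat | lra].
  move=> HW.
  have E1 : p D * / p D = 1 by field; lra.
  have : 1 <= p D * (1 + W) by nra.
  nra.
set C := rsum (fun D => if Rlt_dec 0 (p D) then (q D - p D) * (q D - p D) / p D else 0).
have C0 : 0 <= C.
  apply: rsum_ge0 => D; case: Rlt_dec => H /=; last lra.
  rewrite /Rdiv; apply: Rmult_le_pos; [exact: Rle_0_sqr| apply: Rlt_le; exact: Rinv_0_lt_compat].
have AG := Rabs_pos G.
set s := d / (Rabs G + d * C + 1).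
have Es : s * (Rabs G + d * C + 1) = d by rewrite /s; field; nra.
have s0 : 0 < s by rewrite /s; apply: Rdiv_lt_0_compat; nra.
have sdC : 0 <= s * d * C by apply: Rmult_le_pos; [nra|lra].
have sG : s * Rabs G <= d by nra.
have sC : s * C < 1.
  have H : s * d * C < d by nra.
  have H2 : d * (s * C) < d * 1 by lra.
  exact: (Rmult_lt_reg_l d).
set t := - s * G.
have tb : - d <= t <= d.
  rewrite /t; case: (Rle_dec 0 G) => HG0.
    rewrite Rabs_right in sG; nra.
  rewrite Rabs_left in sG; nra.
have Hnn : forall D, 0 <= mix p q t D.
  move=> D; rewrite /mix; case: (Rlt_dec 0 (p D)) => H.
    have H1 := dp D H; have H2 := q0 D; have H3 := q1 D; have H4 := p1 D.
    case: (Rle_dec 0 t) => Ht.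
      have : 0 <= (1 - t) * p D by apply: Rmult_le_pos; lra.
      have : 0 <= t * q D by apply: Rmult_le_pos; lra.
      lra.
    have : 0 <= (- t) * p D by apply: Rmult_le_pos; lra.
    have : 0 <= (- t) * (1 - q D) by apply: Rmult_le_pos; lra.
    lra.
  have Hp0 : p D = 0 by have := p0 D; lra.
  have Hq0 : q D = 0 by case: (Rlt_dec 0 (q D)) => Hq'; [by have := Hsupp D Hq'; lra | have := q0 D; lra].
  rewrite Hp0 Hq0; lra.
have Hsat := mix_sat Hp.1 Hq Hnn.
have Hle := Hp.2 _ Hsat.
have Hterm : forall D, mix p q t D * ln (mix p q t D) <=
  p D * ln (p D) + t * ((q D * ln (p D) - p D * ln (p D)) + (q D - p D)) +
  t * t * (if Rlt_dec 0 (p D) then (q D - p D) * (q D - p D) / p D else 0).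
  move=> D; rewrite /mix; case: Rlt_dec => H /=.
    have := @psi_quad (p D) (t * (q D - p D)) H.
    have Hx : 0 <= p D + t * (q D - p D) by have := Hnn D; rewrite /mix.
    move=> /(_ Hx) Hq'.
    have E : t * (q D - p D) * (t * (q D - p D)) / p D = t * t * ((q D - p D) * (q D - p D) / p D)
      by field; lra.
    rewrite E in Hq'; nra.
  have Hp0 : p D = 0 by have := p0 D; lra.
  have Hq0 : q D = 0 by case: (Rlt_dec 0 (q D)) => Hq'; [by have := Hsupp D Hq'; lra | have := q0 D; lra].
  rewrite Hp0 Hq0.
  have -> : (0 + t * (0 - 0)) = 0 by ring.
  ring_simplify; lra.
have Hsum := rsum_le Hterm.
rewrite !rsum_add !rsum_scal !rsum_add !rsum_opp Hq.1.2 Hp.1.1.2 -/C in Hsum.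
rewrite /entropy in Hle.
have EG : G = rsum (fun D => q D * ln (p D)) - rsum (fun D => p D * ln (p D)) by [].
set X := rsum (fun D => mix p q t D * ln (mix p q t D)) in Hsum Hle.
set Y := rsum (fun D => p D * ln (p D)) in Hsum Hle EG.
set Q := rsum (fun D => q D * ln (p D)) in Hsum EG.
have G2 : 0 < G * G.
  case: (Rlt_dec 0 G) => H; first nra.
  have : G < 0 by lra.
  nra.
have E : t * G + t * t * C = - (G * G) * (s * (1 - s * C)) by rewrite /t; ring.
have : 0 < s * (1 - s * C) by apply: Rmult_lt_0_compat; lra.
move=> H1.
have : 0 < (G * G) * (s * (1 - s * C)) by apply: Rmult_lt_0_compat.
nra.
Qed.

Lemma maxent_KL q : satisfies S q -> KL q p = entropy p - entropy q.
Proof.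
move=> Hq; rewrite /KL.
rewrite (rsum_ext (G := fun D => q D * ln (q D) - q D * ln (p D))).
  rewrite rsum_sub maxent_orth // /entropy; ring.
move=> D; case: Rlt_dec => H /=.
  have := maxent_supp Hq H => H'; rewrite ln_div' //; ring.
have -> : q D = 0 by have := dist_ge0 Hq.1 D; lra.
ring.
Qed.

End ME.

Lemma div_le a b c : 0 < c -> a <= b * c -> a / c <= b.
Proof.
move=> Hc H; apply: (Rmult_le_reg_r c) => //.
rewrite /Rdiv Rmult_assoc Rinv_l; lra.
Qed.

Lemma ln_le' x y : 0 < x -> x <= y -> ln x <= ln y.
Proof.
move=> Hx Hxy; case: (Req_dec x y) => [->|Hne]; first lra.
apply: Rlt_le; apply: ln_increasing; lra.
Qed.

Lemma has_In (A : Type) (a : pred A) s x : List.In x s -> a x -> has a s.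
Proof.
elim: s => //= y s IH [->|H] Ha; first by rewrite Ha.
by rewrite IH ?orbT.
Qed.

Lemma has_exIn (A : Type) (a : pred A) s : has a s -> exists x, List.In x s /\ a x.
Proof.
elim: s => //= y s IH /orP [H|H]; first by exists y; split => //; left.
by case: (IH H) => x [Hx Hax]; exists x; split => //; right.
Qed.

Definition kT n m (T : tile n m) := INR (#|trows T| * #|tcols T|).

Definition cellsum n m (T : tile n m) (D : bmat n m) :=
  \big[Rplus/0]_(i in trows T) \big[Rplus/0]_(j in tcols T) (if D (i, j) then 1 else 0).

Lemma fr_matE n m (T : tile n m) D : fr_mat T D = / kT T * cellsum T D.
Proof. by []. Qed.

Lemma kT_pos n m (T : tile n m) : tile_nonempty T -> 0 < kT T.
Proof.
case/andP => h1 h2; rewrite -card_gt0 in h1; rewrite -card_gt0 in h2.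
apply: lt_0_INR; apply/ltP; by rewrite muln_gt0 h1 h2.
Qed.

Lemma cellsum_ge0 n m (T : tile n m) D : 0 <= cellsum T D.
Proof. apply: bsum_ge0 => i _; apply: bsum_ge0 => j _; case: (D (i, j)); lra. Qed.

Lemma cellsum_full n m (T : tile n m) :
  \big[Rplus/0]_(i in trows T) \big[Rplus/0]_(j in tcols T) 1 = kT T.
Proof.
rewrite (bsum_ext (G := fun _ => INR #|tcols T| * 1)); last by move=> i _; rewrite bsum_const.
by rewrite bsum_const /kT -multE mult_INR; ring.
Qed.

Lemma cellsum_le n m (T : tile n m) D : cellsum T D <= kT T.
Proof.
rewrite -cellsum_full; apply: bsum_le => i _; apply: bsum_le => j _; case: (D (i,j)); lra.
Qed.

Lemma fr_ge0 n m (T : tile n m) D : tile_nonempty T -> 0 <= fr_mat T D.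
Proof.
move=> H; rewrite fr_matE; apply: Rmult_le_pos; last exact: cellsum_ge0.
apply: Rlt_le; apply: Rinv_0_lt_compat; exact: kT_pos.
Qed.

Lemma fr_le1 n m (T : tile n m) D : tile_nonempty T -> fr_mat T D <= 1.
Proof.
move=> H; rewrite fr_matE; have k0 := kT_pos H; have := cellsum_le T D.
have := cellsum_ge0 T D => h1 h2.
have E : / kT T * kT T = 1 by field; lra.
have : / kT T * cellsum T D <= / kT T * kT T.
  apply: Rmult_le_compat_l => //; apply: Rlt_le; exact: Rinv_0_lt_compat.
lra.
Qed.

Lemma cells_zero n m (T : tile n m) D : tile_nonempty T -> fr_mat T D = 0 ->
  forall i j, i \in trows T -> j \in tcols T -> D (i, j) = false.
Proof.
move=> H; rewrite fr_matE => H0 i j Hi Hj.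
have k0 := kT_pos H.
have C0 : cellsum T D = 0.
  have E : kT T * (/ kT T * cellsum T D) = cellsum T D by field; lra.
  by rewrite -E H0 Rmult_0_r.
have H1 : (if D (i, j) then 1 else 0) <= \big[Rplus/0]_(j in tcols T) (if D (i, j) then 1 else 0).
  apply: (bsum_term (F := fun j => if D (i, j) then 1 else 0)) => // j' _; case: (D (i,j')); lra.
have H2 : \big[Rplus/0]_(j in tcols T) (if D (i, j) then 1 else 0) <= cellsum T D.
  apply: (bsum_term (F := fun i => \big[Rplus/0]_(j in tcols T) (if D (i, j) then 1 else 0))) => // i' _.
  apply: bsum_ge0 => j' _; case: (D (i',j')); lra.
move: H1; case: (D (i, j)) => // H1; lra.
Qed.

Lemma cells_one n m (T : tile n m) D : tile_nonempty T -> fr_mat T D = 1 ->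
  forall i j, i \in trows T -> j \in tcols T -> D (i, j) = true.
Proof.
move=> H; rewrite fr_matE => H0 i j Hi Hj.
have k0 := kT_pos H.
have C0 : cellsum T D = kT T.
  have E : kT T * (/ kT T * cellsum T D) = cellsum T D by field; lra.
  by rewrite -E H0 Rmult_1_r.
set b := fun i j => (if D (i, j) then 1 else 0).
have S0 : \big[Rplus/0]_(i in trows T) \big[Rplus/0]_(j in tcols T) (1 + - b i j) = 0.
  rewrite (bsum_ext (G := fun i => \big[Rplus/0]_(j in tcols T) 1 + - \big[Rplus/0]_(j in tcols T) b i j)).
    rewrite bsum_add bsum_opp cellsum_full.
    have -> : \big[Rplus/0]_(i in trows T) \big[Rplus/0]_(j in tcols T) b i j = cellsum T D by [].
    rewrite C0; ring.
  by move=> i' _; rewrite bsum_add bsum_opp.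
have bnn : forall i j, 0 <= 1 + - b i j by move=> i' j'; rewrite /b; case: (D (i', j')); lra.
have H1 : 1 + - b i j <= \big[Rplus/0]_(j in tcols T) (1 + - b i j).
  apply: (bsum_term (F := fun j => 1 + - b i j)) => //.
have H2 : \big[Rplus/0]_(j in tcols T) (1 + - b i j) <= 0.
  have := @bsum_term _ (fun i => i \in trows T) (fun i => \big[Rplus/0]_(j in tcols T) (1 + - b i j)) i Hi.
  rewrite S0; apply => i' _; by apply: bsum_ge0.
have : 1 <= b i j by lra.
rewrite /b; case: (D (i, j)) => // H3; lra.
Qed.

Lemma fr_cells n m (T : tile n m) (D D' : bmat n m) :
  (forall i j, i \in trows T -> j \in tcols T -> D (i, j) = D' (i, j)) ->
  fr_mat T D = fr_mat T D'.
Proof.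
move=> H; rewrite !fr_matE /cellsum; congr (_ * _).
apply: eq_bigr => i Hi; apply: eq_bigr => j Hj; by rewrite H.
Qed.

Lemma supp_fr n m (X : tileset n m) p :
  (forall c, List.In c X -> exact_ct c /\ tile_nonempty c.1) ->
  satisfies X p -> forall D, 0 < p D -> forall c, List.In c X -> fr_mat c.1 D = c.2.
Proof.
move=> Hex [[p0 p1] pc] D HD c Hc.
case: (Hex c Hc) => [[E|E] Hne]; have := pc c Hc; rewrite /fr_dist E => Hs.
  have := @rsum_term _ (fun D => p D * fr_mat c.1 D) D.
  rewrite Hs => /(_ (fun D' => Rmult_le_pos _ _ (p0 D') (fr_ge0 D' Hne))) H.
  have := fr_ge0 D Hne => H2.
  have : fr_mat c.1 D <= 0.
    case: (Rle_dec (fr_mat c.1 D) 0) => // Hn; have : 0 < p D * fr_mat c.1 D by apply: Rmult_lt_0_compat; lra.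
    lra.
  lra.
have Hs2 : rsum (fun D => p D * (1 - fr_mat c.1 D)) = 0.
  rewrite (rsum_ext (G := fun D => p D - p D * fr_mat c.1 D)); last by move=> D'; ring.
  rewrite rsum_sub Hs p1; ring.
have h1 : forall D', 0 <= p D' * (1 - fr_mat c.1 D').
  by move=> D'; apply: Rmult_le_pos => //; have := fr_le1 D' Hne; lra.
have := @rsum_term _ (fun D => p D * (1 - fr_mat c.1 D)) D.
rewrite Hs2 => /(_ h1) H.
have := fr_le1 D Hne => H2.
have : 1 - fr_mat c.1 D <= 0.
  case: (Rle_dec (1 - fr_mat c.1 D) 0) => // Hn; have : 0 < p D * (1 - fr_mat c.1 D) by apply: Rmult_lt_0_compat; lra.
  lra.
lra.
Qed.

Section Exact.
Variables (n m : nat) (M : tileset n m) (D0 : bmat n m).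
Hypothesis Hex : forall c, List.In c M -> exact_ct c /\ tile_nonempty c.1.
Hypothesis HD0 : forall c, List.In c M -> fr_mat c.1 D0 = c.2.

Definition inX (X : tileset n m) (x : 'I_n * 'I_m) : bool :=
  has (fun c : ctile n m => (x.1 \in trows c.1) && (x.2 \in tcols c.1)) X.

Definition SX (X : tileset n m) : {set bmat n m} :=
  [set D : bmat n m | [forall x, inX X x ==> (D x == D0 x)]].

Lemma inX_cat X Y x : inX (X ++ Y) x = inX X x || inX Y x.
Proof. exact: has_cat. Qed.

Lemma SXP X (D : bmat n m) : reflect (forall x, inX X x -> D x = D0 x) (D \in SX X).
Proof.
rewrite inE; apply: (iffP forallP) => H x.
  by move=> Hx; move: (H x); rewrite Hx => /eqP.
by apply/implyP => /H ->.
Qed.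

Variable X : tileset n m.
Hypothesis HXM : forall c, List.In c X -> List.In c M.

Lemma SX_fr (D : bmat n m) : D \in SX X -> forall c, List.In c X -> fr_mat c.1 D = c.2.
Proof.
move/SXP => H c Hc; rewrite -(HD0 (HXM Hc)); apply: fr_cells => i j Hi Hj.
apply: H; apply: (has_In Hc) => /=; by rewrite Hi Hj.
Qed.

Lemma fr_SX (D : bmat n m) : (forall c, List.In c X -> fr_mat c.1 D = c.2) -> D \in SX X.
Proof.
move=> H; apply/SXP => -[i j] /has_exIn [c [Hc /andP [Hi Hj]]] /=.
case: (Hex (HXM Hc)) => [[E|E] Hne].
  rewrite (cells_zero Hne _ Hi Hj) ?(cells_zero Hne _ Hi Hj) //.
    by rewrite HD0 ?E //; apply: HXM.
  by rewrite H.
rewrite (cells_one Hne _ Hi Hj) ?(cells_one Hne _ Hi Hj) //.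
  by rewrite HD0 ?E //; apply: HXM.
by rewrite H.
Qed.

Lemma D0_SX : D0 \in SX X.
Proof. apply: fr_SX => c Hc; exact: HD0 (HXM Hc). Qed.

Definition NX := INR #|SX X|.

Lemma NX_pos : 0 < NX.
Proof.
apply: lt_0_INR; apply/ltP; rewrite card_gt0; apply/set0Pn; exists D0; exact: D0_SX.
Qed.

Definition uX (D : bmat n m) := if D \in SX X then / NX else 0.

Lemma rsum_if (c : R) : rsum (fun D : bmat n m => if D \in SX X then c else 0) = NX * c.
Proof. by rewrite /rsum -big_mkcond bsum_const. Qed.

Lemma uX_dist : is_dist uX.
Proof.
have N0 := NX_pos.
split.
  move=> D; rewrite /uX; case: ifP => _; [apply: Rlt_le; exact: Rinv_0_lt_compat| lra].
rewrite /uX rsum_if; field; lra.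
Qed.

Lemma uX_sat : satisfies X uX.
Proof.
have N0 := NX_pos.
split; first exact: uX_dist.
move=> c Hc; rewrite /fr_dist.
rewrite (rsum_ext (G := fun D => if D \in SX X then / NX * c.2 else 0)).
  rewrite rsum_if; field; lra.
move=> D; rewrite /uX; case: ifP => H; last ring.
by rewrite SX_fr.
Qed.

Lemma uX_ent : entropy uX = ln NX.
Proof.
have N0 := NX_pos.
rewrite /entropy (rsum_ext (G := fun D => if D \in SX X then / NX * ln (/ NX) else 0)).
  rewrite rsum_if ln_Rinv //; field; lra.
by move=> D; rewrite /uX; case: ifP => _; ring.
Qed.

Lemma ent_le p : satisfies X p -> entropy p <= ln NX.
Proof.
move=> Hp; have N0 := NX_pos.
have p0 := dist_ge0 Hp.1.
have Hterm : forall D, - (p D * ln (p D)) + (- ln NX) * p D <= uX D + - p D.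
  move=> D; case: (Rlt_dec 0 (p D)) => H.
    have HS : D \in SX X.
      apply: fr_SX => c Hc.
      apply: (supp_fr (X := X) _ Hp H Hc) => c' Hc'; exact: Hex (HXM Hc').
    rewrite /uX HS.
    have HpN : 0 < p D * NX by apply: Rmult_lt_0_compat.
    have L := ln_le_sub1 (Rinv_0_lt_compat _ HpN).
    rewrite ln_Rinv // ln_mult // in L.
    have L2 : p D * (- (ln (p D) + ln NX)) <= p D * (/ (p D * NX) - 1)
      by apply: Rmult_le_compat_l; lra.
    have E : p D * (/ (p D * NX) - 1) = / NX - p D by field; lra.
    lra.
  have -> : p D = 0 by have := p0 D; lra.
  have E1 : - (0 * ln 0) + (- ln NX) * 0 = 0 by ring.
  rewrite E1 /uX; case: ifP => _; last lra.
  have := Rinv_0_lt_compat _ N0; lra.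
have := rsum_le Hterm; rewrite !rsum_add !rsum_opp rsum_scal Hp.1.2 uX_dist.2 /entropy; lra.
Qed.

Lemma maxent_ent p : is_maxent X p -> entropy p = ln NX.
Proof.
move=> Hp; apply: Rle_antisym; first exact: ent_le Hp.1.
rewrite -uX_ent; apply: Hp.2; exact: uX_sat.
Qed.

End Exact.

Lemma card_ineq n m (D0 : bmat n m) (T U B : tileset n m) :
  leq (muln #|SX D0 (U ++ B)| #|SX D0 (T ++ B)|) (muln #|SX D0 B| #|SX D0 (T ++ U ++ B)|).
Proof.
pose f := fun (x : bmat n m * bmat n m) =>
  (([ffun y => if inX U y && ~~ inX B y then x.2 y else x.1 y] : bmat n m),
   ([ffun y => if inX U y then x.1 y else x.2 y] : bmat n m)).
set A := setX (SX D0 (U ++ B)) (SX D0 (T ++ B)).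
rewrite -!cardsX -/A.
have Hinj : {in A &, injective f}.
  move=> [D1 D2] [D1' D2'] /setXP [/= h1 h2] /setXP [/= h1' h2'] [E1 E2].
  have P1 := elimT (SXP D0 (U ++ B) D1) h1.
  have P1' := elimT (SXP D0 (U ++ B) D1') h1'.
  have P2 := elimT (SXP D0 (T ++ B) D2) h2.
  have P2' := elimT (SXP D0 (T ++ B) D2') h2'.
  congr pair; apply/ffunP => y.
    have := congr1 (fun g : bmat n m => g y) E1; rewrite !ffunE.
    case hu: (inX U y); case hb: (inX B y) => //= _.
    by rewrite P1 ?P1' // inX_cat hu.
  have := congr1 (fun g : bmat n m => g y) E1; rewrite !ffunE.
  have := congr1 (fun g : bmat n m => g y) E2; rewrite !ffunE.
  case hu: (inX U y); case hb: (inX B y) => //= _ _.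
  by rewrite P2 ?P2' // inX_cat hb orbT.
rewrite -(card_in_imset Hinj).
apply: subset_leq_card; apply/subsetP => z /imsetP [[D1 D2] /setXP [/= h1 h2] ->].
have P1 := elimT (SXP D0 (U ++ B) D1) h1.
have P2 := elimT (SXP D0 (T ++ B) D2) h2.
apply/setXP; split; apply/SXP => y; rewrite ffunE /=.
  move=> hb; rewrite hb andbF; apply: P1; by rewrite inX_cat hb orbT.
rewrite !inX_cat; case hu: (inX U y) => /= H.
  by apply: P1; rewrite inX_cat hu.
by apply: P2; rewrite inX_cat.
Qed.

Lemma sat_sub n m (S S' : tileset n m) p :
  satisfies S p -> (forall c, List.In c S' -> List.In c S) -> satisfies S' p.
Proof. case=> Hd Hc Hin; split => // c Hc'; exact: Hc (Hin c Hc'). Qed.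

Lemma dist_pos n m (p : bmat n m -> R) : is_dist p -> exists D, 0 < p D.
Proof.
case=> p0 p1; apply: NNPP => H.
have : rsum p = 0.
  apply: rsum_zero => D; have := p0 D; case: (Rlt_dec 0 (p D)) => h; last lra.
  by exfalso; apply: H; exists D.
lra.
Qed.

Local Close Scope R_scope.

Theorem theorem6 (n m : nat) (Hn : (0 < n)%N) (Hm : (0 < m)%N)
  (T U B : tileset n m)
  (Hne : forall c, List.In c (T ++ U ++ B) -> tile_nonempty c.1)
  (Hcons : consistent (T ++ U ++ B))
  (pM pUB pTB pB : bmat n m -> R)
  (HM : is_maxent (T ++ U ++ B) pM)
  (HUB : is_maxent (U ++ B) pUB)
  (HTB : is_maxent (T ++ B) pTB)
  (HB : is_maxent B pB) :
  (dscore pM pUB pTB pB <= 2)%R /\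
  ((forall c, List.In c (T ++ U ++ B) -> exact_ct c) ->
     (dscore pM pUB pTB pB <= 1)%R).
Proof.
have inM1 : forall c, List.In c (U ++ B) -> List.In c (T ++ U ++ B)
  by move=> c Hc; apply: List.in_or_app; right.
have inM2 : forall c, List.In c (T ++ B) -> List.In c (T ++ U ++ B).
  move=> c Hc; case: (List.in_app_or _ _ _ Hc) => H; apply: List.in_or_app; [by left| right; apply: List.in_or_app; by right].
have inM3 : forall c, List.In c B -> List.In c (T ++ U ++ B)
  by move=> c Hc; apply: inM1; apply: List.in_or_app; right.
have inB1 : forall c, List.In c B -> List.In c (U ++ B) by move=> c Hc; apply: List.in_or_app; right.
have inB2 : forall c, List.In c B -> List.In c (T ++ B) by move=> c Hc; apply: List.in_or_app; right.
have sUB := sat_sub HM.1 inM1.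
have sTB := sat_sub HM.1 inM2.
have sB := sat_sub HM.1 inM3.
have K1 := maxent_KL HUB sUB.
have K2 := maxent_KL HTB sTB.
have K0 := maxent_KL HB sB.
have e1 := HB.2 _ (sat_sub HUB.1 inB1).
have e2 := HB.2 _ (sat_sub HTB.1 inB2).
have e0 := HB.2 _ sB.
have e3 := HUB.2 _ sUB.
have e4 := HTB.2 _ sTB.
have key : (forall c, List.In c (T ++ U ++ B) -> exact_ct c) ->
    (entropy pUB + entropy pTB <= entropy pB + entropy pM)%R.
  move=> Hexact.
  have Hex : forall c, List.In c (T ++ U ++ B) -> exact_ct c /\ tile_nonempty c.1
    by move=> c Hc; split; [exact: Hexact | exact: Hne].
  have [D0 HD0p] := dist_pos HM.1.1.
  have HD0 := supp_fr Hex HM.1 HD0p.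
  have inMM : forall c, List.In c (T ++ U ++ B) -> List.In c (T ++ U ++ B) by [].
  rewrite (maxent_ent Hex HD0 inM1 HUB) (maxent_ent Hex HD0 inM2 HTB).
  rewrite (maxent_ent Hex HD0 inM3 HB) (maxent_ent Hex HD0 inMM HM).
  have n1 := NX_pos Hex HD0 inM1. have n2 := NX_pos Hex HD0 inM2.
  have n3 := NX_pos Hex HD0 inM3. have n4 := NX_pos Hex HD0 inMM.
  rewrite -!ln_mult //.
  apply: ln_le'; first exact: Rmult_lt_0_compat.
  rewrite /NX -!mult_INR; apply: le_INR; apply/leP.
  exact: card_ineq.
rewrite /dscore; case: Req_EM_T => H0 /=.
  split; [lra | move=> _; lra].
have Kpos : (0 < KL pM pB)%R by rewrite K0 in H0 *; lra.
split.
  apply: div_le => //; rewrite K1 K2 K0; lra.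
move=> Hexact; apply: div_le => //; have := key Hexact; rewrite K1 K2 K0; lra.
Qed.
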